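(* Let $A\subseteq\mathbb N_0\times\mathbb S$ be a Schnorr test for a computable forecasting system $\varphi$ such that $A_n$ is a partial cut for every $n\in\mathbb N_0$. Then there is a growth function $\varsigma:\mathbb N_0\to\mathbb N_0$ such that $$\sum_{n=0}^{\infty}2^{k}\,\overline P_\varphi\big([A_n^{\ge\varsigma(k)}]\big)\le2^{-k}\quad\text{for all }k\in\mathbb N_0.$$
   Context: $\mathbb N_0=\{0,1,\dots\}$; $\Omega=\{0,1\}^{\mathbb N}$; $\mathbb S$ finite binary strings, $|s|$ length, $\omega^n$ first $n$ entries; $[s]=\{\omega:\omega^{|s|}=s\}$, $[A]=\bigcup_{s\in A}[s]$; a partial cut is a prefix-free subset of $\mathbb S$. For $A\subseteq\mathbb N_0\times\mathbb S$: $A_n=\{s:(n,s)\in A\}$, $A_n^{<\ell}=\{s\in A_n:|s|<\ell\}$, $A_n^{\ge\ell}=\{s\in A_n:|s|\ge\ell\}$. $\mathcal I$: nonempty closed subintervals of $[0,1]$; $\overline E_I(f)=\max_{p\in I}[pf(1)+(1-p)f(0)]$. Forecasting system $\varphi:\mathbb S\to\mathcal I$, $\underline\varphi=\min\varphi$, $\overline\varphi=\max\varphi$; computable if $\underline\varphi,\overline\varphi$ are computable real maps (approximable by a recursive rational map to within $2^{-N}$). Supermartingale: $M:\mathbb S\to\mathbb R$ with $\overline E_{\varphi(s)}(M(s\,\cdot))\le M(s)$. $\overline P_\varphi(G)=\inf\{M(\square):M\text{ supermartingale for }\varphi,\ \liminf_nM(\omega^n)\ge\mathbb 1_G(\omega)\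 \forall\omega\}$. A Schnorr test for $\varphi$ is a recursive $A\subseteq\mathbb N_0\times\mathbb S$ with $\overline P_\varphi([A_n])\le2^{-n}$ for all $n$, and a recursive $e:\mathbb N_0^2\to\mathbb N_0$ with $\overline P_\varphi([A_n]\setminus[A_n^{<\ell}])\le2^{-N}$ for all $(N,n)$ and $\ell\ge e(N,n)$. A growth function is a recursive, non-decreasing, unbounded map $\mathbb N_0\to\mathbb N_0$. *)

(* Defs.v *)
From HB Require Import structures.
From mathcomp Require Import all_boot all_order all_algebra.
From mathcomp Require Import all_classical all_reals all_analysis.
Set Implicit Arguments. Unset Strict Implicit. Unset Printing Implicit Defensive.
Import Order.TTheory GRing.Theory Num.Theory.
Local Open Scope classical_set_scope.
Local Open Scope ring_scope.

(* A deep embedding of (partial) mu-recursive functions on argument lists.   *)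
(* Missing arguments default to 0.                                           *)
Inductive prf : Type :=
| PZero : prf
| PSucc : prf
| PProj : nat -> prf
| PComp : prf -> list prf -> prf
| PRec  : prf -> prf -> prf
| PMin  : prf -> prf.

Inductive peval : prf -> seq nat -> nat -> Prop :=
| ev_zero v : peval PZero v 0
| ev_succ v : peval PSucc v (nth 0 v 0).+1
| ev_proj i v : peval (PProj i) v (nth 0 v i)
| ev_comp f gs v ys y :
    peval_list gs v ys -> peval f ys y -> peval (PComp f gs) v y
| ev_rec0 f g v y : peval f v y -> peval (PRec f g) (0 :: v) y
| ev_recS f g n v r y :
    peval (PRec f g) (n :: v) r -> peval g [:: n, r & v] y ->
    peval (PRec f g) (n.+1 :: v) y
| ev_recnil f g y : peval (PRec f g) [:: 0] y -> peval (PRec f g) [::] y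
| ev_min f v n :
    peval f (n :: v) 0 ->
    (forall m, (m < n)%N -> exists2 k, (0 < k)%N & peval f (m :: v) k) ->
    peval (PMin f) v n
with peval_list : list prf -> seq nat -> seq nat -> Prop :=
| evl_nil v : peval_list [::] v [::]
| evl_cons g gs v y ys :
    peval g v y -> peval_list gs v ys -> peval_list (g :: gs) v (y :: ys).

Definition recursive1 (f : nat -> nat) : Prop :=
  exists p, forall n, peval p [:: n] (f n).
Definition recursive2 (f : nat -> nat -> nat) : Prop :=
  exists p, forall m n, peval p [:: m; n] (f m n).

(* finite binary strings are [seq bool]; true = 1, false = 0 *)
(* a bijective (and computable) coding of binary strings by naturals *)
Fixpoint code (s : seq bool) : nat :=
  match s with [::] => 0 | b :: t => (code t).*2 + b + 1 end.

Definition Omega := nat -> bool.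
Definition pre (w : Omega) (n : nat) : seq bool := mkseq w n.

Definition cyl (A : set (seq bool)) : set Omega :=
  [set w | exists2 s, A s & pre w (size s) = s].

Definition partial_cut (A : set (seq bool)) : Prop :=
  forall s t, A s -> A t -> prefix s t -> s = t.

Definition sec (A : nat -> seq bool -> bool) (n : nat) : set (seq bool) :=
  [set s | A n s].
Definition sec_lt (A : nat -> seq bool -> bool) (n l : nat) : set (seq bool) :=
  [set s | A n s /\ (size s < l)%N].
Definition sec_ge (A : nat -> seq bool -> bool) (n l : nat) : set (seq bool) :=
  [set s | A n s /\ (l <= size s)%N].

Section Forecast.
Variable R : realType.

(* phi(s) = [lo s, hi s], a nonempty closed subinterval of [0,1] *)
Definition forecasting_system (lo hi : seq bool -> R) : Prop :=
  forall s, 0 <= lo s /\ lo s <= hi s /\ hi s <= 1.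

Definition uexp (a b : R) (f : bool -> R) : R :=
  sup [set x | exists2 p, a <= p <= b & x = p * f true + (1 - p) * f false].

Definition supermartingale (lo hi : seq bool -> R) (M : seq bool -> R) : Prop :=
  forall s, uexp (lo s) (hi s) (fun b => M (rcons s b)) <= M s.

Definition indic (G : set Omega) (w : Omega) : R :=
  if pselect (G w) then 1 else 0.

Definition upper_prob (lo hi : seq bool -> R) (G : set Omega) : \bar R :=
  ereal_inf [set ((M [::])%:E) | M in
    [set M | supermartingale lo hi M /\
      forall w, ((indic G w)%:E <= limn_einf (fun n => (M (pre w n))%:E))%E]].

Definition computable_real_map (f : seq bool -> R) : Prop :=
  exists sg nu de : nat -> nat -> nat,
    [/\ recursive2 sg, recursive2 nu, recursive2 de &
      forall s N, `| (-1) ^+ (sg (code s) N) * (nu (code s) N)%:R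
                      / ((de (code s) N).+1)%:R - f s | <= 2 ^- N].

Definition computable_fs (lo hi : seq bool -> R) : Prop :=
  computable_real_map lo /\ computable_real_map hi.

Definition recursive_set (A : nat -> seq bool -> bool) : Prop :=
  exists p, forall n s, peval p [:: n; code s] (A n s : nat).

Definition schnorr_test (lo hi : seq bool -> R) (A : nat -> seq bool -> bool) : Prop :=
  [/\ recursive_set A,
      (forall n, (upper_prob lo hi (cyl (sec A n)) <= (2 ^- n)%:E)%E) &
      exists e : nat -> nat -> nat, recursive2 e /\
        forall N n l, (e N n <= l)%N ->
          (upper_prob lo hi (cyl (sec A n) `\` cyl (sec_lt A n l))
             <= (2 ^- N)%:E)%E].

End Forecast.

Definition growth_function (f : nat -> nat) : Prop :=
  [/\ recursive1 f, {homo f : m n / (m <= n)%N} &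
      forall m, exists k, (m <= f k)%N].

(* Main.v *)
Require Import Defs.
From HB Require Import structures.
From mathcomp Require Import all_boot all_order all_algebra.
From mathcomp Require Import all_classical all_reals all_analysis.
From mathcomp Require Import ring lra zify.
Import Order.TTheory GRing.Theory Num.Theory.
Local Open Scope classical_set_scope.
Local Open Scope ring_scope.

Lemma ev_proj' i v y : nth 0%N v i = y -> peval (PProj i) v y.
Proof. by move=> <-; exact: ev_proj. Qed.

Lemma ev_comp1 f g v y z : peval g v y -> peval f [:: y] z ->
  peval (PComp f [:: g]) v z.
Proof. move=> H1 H2; apply: ev_comp H2; apply: evl_cons H1 (evl_nil _). Qed.

Lemma ev_comp2 f g1 g2 v y1 y2 z : peval g1 v y1 -> peval g2 v y2 ->
  peval f [:: y1; y2] z -> peval (PComp f [:: g1; g2]) v z.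
Proof.
move=> H1 H2 H3; apply: ev_comp H3; apply: evl_cons H1 _.
exact: evl_cons H2 (evl_nil _).
Qed.

Lemma rec_ok f g v b (h : nat -> nat) : peval f v b ->
  (forall n r, peval g [:: n, r & v] (r + h n)%N) ->
  forall m, peval (PRec f g) (m :: v) (b + \sum_(0 <= i < m) h i)%N.
Proof.
move=> Hf Hg; elim=> [|m IH].
  by rewrite big_geq // addn0; exact: ev_rec0.
apply: ev_recS IH _; rewrite big_nat_recr //= addnA; exact: Hg.
Qed.

Definition padd := PRec (PProj 0) (PComp PSucc [:: PProj 1]).

Lemma padd_ok m x : peval padd [:: m; x] (m + x)%N.
Proof.
have := @rec_ok (PProj 0) (PComp PSucc [:: PProj 1]) [:: x] x (fun _ => 1%N).
move=> /(_ (ev_proj' 0 [:: x] x erefl)) H.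
have -> : (m + x = x + \sum_(0 <= i < m) 1)%N.
  by rewrite sum_nat_const_nat muln1 subn0 addnC.
apply: H => n r; apply: ev_comp1; first exact: ev_proj'.
by rewrite addn1; exact: ev_succ.
Qed.

Definition two := PComp PSucc [:: PComp PSucc [:: PZero]].
Lemma two_ok v : peval two v 2.
Proof.
apply: ev_comp1; last exact: ev_succ.
apply: ev_comp1; last exact: ev_succ.
exact: ev_zero.
Qed.

Section Prog.
Variables (pe : prf) (e : nat -> nat -> nat).
Hypothesis Hpe : forall a b, peval pe [:: a; b] (e a b).

Definition hh j i := e (j + (j + (i + 2))) i.
Definition gg j := (j + (0 + \sum_(0 <= i < j + (j + 2)) hh j i))%N.
Definition vsf k := (0 + \sum_(0 <= i < k.+1) gg i)%N.

Definition pA := PComp padd [:: PProj 2; PComp padd [:: PProj 2; PComp padd [:: PProj 0; two]]].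
Definition pH := PComp pe [:: pA; PProj 0].
Definition pS := PRec PZero (PComp padd [:: PProj 1; pH]).
Definition pT := PComp padd [:: PProj 0; PComp padd [:: PProj 0; two]].
Definition pG := PComp padd [:: PProj 0; PComp pS [:: pT; PProj 0]].
Definition pV := PRec PZero (PComp padd [:: PProj 1; PComp pG [:: PProj 0]]).
Definition pvs := PComp pV [:: PComp PSucc [:: PProj 0]].

Lemma pS_ok m j : peval pS [:: m; j] (0 + \sum_(0 <= i < m) hh j i)%N.
Proof.
apply: rec_ok; first exact: ev_zero.
move=> n r; apply: ev_comp2 (padd_ok _ _); first exact: ev_proj'.
apply: ev_comp2 (Hpe _ _); last exact: ev_proj'.
apply: ev_comp2 (padd_ok _ _); first exact: ev_proj'.
apply: ev_comp2 (padd_ok _ _); first exact: ev_proj'.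
apply: ev_comp2 (padd_ok _ _); first exact: ev_proj'.
exact: two_ok.
Qed.

Lemma pG_ok j : peval pG [:: j] (gg j).
Proof.
apply: ev_comp2 (padd_ok _ _); first exact: ev_proj'.
apply: ev_comp2 (pS_ok _ _); last exact: ev_proj'.
apply: ev_comp2 (padd_ok _ _); first exact: ev_proj'.
apply: ev_comp2 (padd_ok _ _); first exact: ev_proj'.
exact: two_ok.
Qed.

Lemma pvs_ok k : peval pvs [:: k] (vsf k).
Proof.
apply: ev_comp1; first by apply: ev_comp1; [exact: ev_proj'|exact: ev_succ].
apply: rec_ok; first exact: ev_zero.
move=> n r; apply: ev_comp2 (padd_ok _ _); first exact: ev_proj'.
apply: ev_comp1; [exact: ev_proj'|exact: pG_ok].
Qed.

Lemma le_sum_nat (F : nat -> nat) i m : (i < m)%N -> (F i <= \sum_(0 <= j < m) F j)%N.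
Proof.
elim: m => // m IH; rewrite ltnS leq_eqVlt => /orP[/eqP->|/IH H].
  by rewrite big_nat_recr //= leq_addl.
by rewrite big_nat_recr //= (leq_trans H) // leq_addr.
Qed.

Lemma vsf_homo : {homo vsf : m n / (m <= n)%N}.
Proof.
move=> m n; elim: n => [|n IH]; first by rewrite leqn0 => /eqP->.
rewrite leq_eqVlt => /orP[/eqP->//|]; rewrite ltnS => /IH H.
by rewrite (leq_trans H) // /vsf !add0n [X in (_ <= X)%N]big_nat_recr //= leq_addr.
Qed.

Lemma vsf_ge k : (k <= vsf k)%N.
Proof.
rewrite /vsf add0n (leq_trans _ (@le_sum_nat gg k k.+1 (ltnSn k))) // /gg leq_addr //.
Qed.

Lemma vsf_e k n : (n < k + (k + 2))%N -> (e (k + (k + (n + 2))) n <= vsf k)%N.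
Proof.
move=> Hn; rewrite /vsf add0n (leq_trans _ (@le_sum_nat gg k k.+1 (ltnSn k))) //.
rewrite /gg add0n (leq_trans _ (leq_addl _ _)) //.
exact: (@le_sum_nat (hh k) n).
Qed.

Lemma vs_growth : growth_function vsf.
Proof.
split; first by exists pvs; exact: pvs_ok.
  exact: vsf_homo.
by move=> m; exists m; exact: vsf_ge.
Qed.
End Prog.
Section An.
Variable R : realType.

Lemma uexp_lo (a b : R) f : 0 <= a -> a <= b -> b <= 1 ->
  a * f true + (1 - a) * f false <= uexp a b f.
Proof.
move=> a0 ab b1; apply: sup_upper_bound; last by exists a; rewrite ?lexx ?ab.
split; first by exists (a * f true + (1 - a) * f false); exists a; rewrite ?lexx ?ab.
exists (`|f true| + `|f false|) => _ [p /andP[ap pb] ->].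
have h1 := ler_norm (f true); have h2 := ler_norm (f false).
have h3 := normr_ge0 (f true); have h4 := normr_ge0 (f false).
have h5 := ler_normr (f true); have h6 := ler_normr (f false).
have p0 : 0 <= p by apply: le_trans ap.
have p1 : p <= 1 by apply: le_trans b1.
have e1 : p * f true <= p * `|f true| by rewrite ler_wpM2l.
have e2 : (1 - p) * f false <= (1 - p) * `|f false| by rewrite ler_wpM2l // subr_ge0.
have e3 : 0 <= (1 - p) * `|f true| by rewrite mulr_ge0 // subr_ge0.
have e4 : 0 <= p * `|f false| by rewrite mulr_ge0.
lra.
Qed.

Lemma child_false (lo hi M : seq bool -> R) s :
  forecasting_system lo hi -> supermartingale lo hi M ->
  ~~ (M (rcons s true) <= M s) -> M (rcons s false) <= M s.
Proof.
move=> /(_ s) [l0 [lh h1]] /(_ s) Hs; rewrite -ltNge => Ht.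
have := @uexp_lo (lo s) (hi s) (fun b => M (rcons s b)) l0 lh h1 => /= /le_trans /(_ Hs) H.
rewrite leNgt; apply/negP => Hf.
have : lo s * (M (rcons s true) - M s) + (1 - lo s) * (M (rcons s false) - M s) > 0.
  have [->|lpos] := eqVneq (lo s) 1.
    by rewrite subrr mul0r addr0 mul1r subr_gt0.
  have lt1 : lo s < 1 by rewrite lt_neqAle lpos (le_trans lh).
  apply: ltr_pwDr; first by rewrite mulr_gt0 // subr_gt0.
  by rewrite mulr_ge0 // subr_ge0 ltW.
lra.
Qed.

Lemma M_ge0 (lo hi M : seq bool -> R) :
  forecasting_system lo hi -> supermartingale lo hi M ->
  (forall w, (0%:E <= limn_einf (fun n => (M (pre w n))%:E))%E) -> 0 <= M [::].
Proof.
move=> Hfs Hsm Hl; rewrite leNgt; apply/negP => Mlt.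
pose next s := rcons s (M (rcons s true) <= M s).
pose P n := iter n next [::].
have Hle n : M (P n.+1) <= M (P n).
  change (M (next (P n)) <= M (P n)); rewrite /next.
  case: (boolP (M (rcons (P n) true) <= M (P n))) => [->//|H].
  exact: child_false.
have Hdec n : M (P n) <= M [::].
  by elim: n => // n IH; apply: le_trans (Hle n) IH.
have Hsz n : size (P n) = n by elim: n => //= n IH; rewrite size_rcons IH.
have nthP n i : (i < n)%N -> nth false (P n) i = nth false (P i.+1) i.
  elim: n => // n IH; rewrite ltnS leq_eqVlt => /orP[/eqP->//|Hi].
  by rewrite /= {1}/next nth_rcons Hsz Hi IH.
pose w i := nth false (P i.+1) i.
have Hpre n : pre w n = P n.
  apply: (@eq_from_nth _ false); first by rewrite size_mkseq Hsz.
  by move=> i; rewrite size_mkseq => Hi; rewrite nth_mkseq // nthP.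
have := Hl w; rewrite limn_einf_lim => H0.
have : (limn (einfs (fun n => (M (pre w n))%:E)) <= (M [::])%:E)%E.
  apply: lime_le; first exact: is_cvg_einfs.
  apply: nearW => n; apply: (@le_trans _ _ (M (pre w n))%:E).
    by apply: ereal_inf_lbound; exists n => /=.
  by rewrite lee_fin Hpre.
move/(le_trans H0); rewrite lee_fin => /(lt_le_trans Mlt); rewrite ltxx.
by [].
Qed.

Lemma upper_prob_ge0 (lo hi : seq bool -> R) G : forecasting_system lo hi ->
  (0%:E <= upper_prob lo hi G)%E.
Proof.
move=> Hfs; apply: le_ereal_inf_tmp => _ [M [HM Hl] <-].
rewrite lee_fin; apply: (@M_ge0 lo hi M Hfs HM) => w; apply: (le_trans _ (Hl w)).
by rewrite lee_fin /Defs.indic; case: (pselect (G w)).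
Qed.

Lemma upper_prob_le (lo hi : seq bool -> R) (G H : set Omega) : G `<=` H ->
  (upper_prob lo hi G <= upper_prob lo hi H)%E.
Proof.
move=> GH; apply: ereal_inf_le_tmp => _ [M [HM Hl] <-].
exists M => //; split => // w; apply: (le_trans _ (Hl w)).
rewrite lee_fin /Defs.indic; case: (pselect (G w)) => [Gw|nGw]; last first.
  by case: (pselect (H w)).
by case: (pselect (H w)) => // nHw; exfalso; exact: nHw (GH _ Gw).
Qed.

End An.

Lemma pre_take w a b : (a <= b)%N -> take a (pre w b) = pre w a.
Proof.
move=> ab; apply: (@eq_from_nth _ false).
  by rewrite size_take size_mkseq size_mkseq; case: (ltnP a b) => //; lia.
move=> i; rewrite size_take size_mkseq => Hi.
have ia : (i < a)%N by move: Hi; case: (ltnP a b) => // ba; lia.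
by rewrite nth_take // !nth_mkseq //; lia.
Qed.

Lemma cyl_ge_sub A n l : partial_cut (sec A n) ->
  cyl (sec_ge A n l) `<=` cyl (sec A n) `\` cyl (sec_lt A n l).
Proof.
move=> pc w [s [As ls] ws]; split; first by exists s.
move=> [t [At lt] wt].
have ts : (size t <= size s)%N by lia.
have : t = s.
  apply: pc => //; rewrite prefixE -{1}ws (pre_take _ _ _ ts) wt.
  by [].
by move=> E; move: lt ls; rewrite E; lia.
Qed.

Lemma cyl_ge_sub2 A n l : cyl (sec_ge A n l) `<=` cyl (sec A n).
Proof. by move=> w [s [As _] ws]; exists s. Qed.

Lemma geo (R : realType) a m :
  \sum_(0 <= i < m) ((2:R) ^- (i + a)) <= 2 * 2 ^- a.
Proof.
suff H : \sum_(0 <= i < m) ((2:R) ^- (i + a)) + 2 * 2 ^- (m + a) = 2 * 2 ^- a.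
  rewrite -H lerDl mulr_ge0 // invr_ge0 exprn_ge0 //.
elim: m => [|m IH]; first by rewrite big_geq // add0r.
rewrite big_nat_recr //= -IH -addrA; congr (_ + _).
rewrite addSn exprS invfM mulrA mulfV // mul1r; lra.
Qed.

Theorem lemma8p4 (R : realType) (lo hi : seq bool -> R)
  (A : nat -> seq bool -> bool) :
  forecasting_system lo hi -> computable_fs lo hi ->
  schnorr_test lo hi A ->
  (forall n, partial_cut (sec A n)) ->
  exists vs : nat -> nat, growth_function vs /\
    forall k : nat,
      (\sum_(0 <= n <oo) ((2 ^+ k)%:E * upper_prob lo hi (cyl (sec_ge A n (vs k))))
        <= (2 ^- k)%:E)%E.
Proof.
move=> Hfs _ [_ Hbd [e [[pe Hpe] He]]] Hpc.
exists (vsf e); split; first exact: (@vs_growth pe e Hpe).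
move=> k; set T := (k + (k + 2))%N.
pose t n := upper_prob lo hi (cyl (sec_ge A n (vsf e k))).
have t0 n : (0%:E <= t n)%E by exact: (@upper_prob_ge0 R lo hi _ Hfs).
have t1 n : (t n <= (2 ^- n)%:E)%E.
  exact: le_trans (@upper_prob_le R lo hi _ _ (@cyl_ge_sub2 A n _)) (Hbd n).
have t2 n : (n < T)%N -> (t n <= (2 ^- (n + T))%:E)%E.
  move=> Hn; apply: le_trans (@upper_prob_le R lo hi _ _ (@cyl_ge_sub A n _ (Hpc n))) _.
  have -> : (n + T = k + (k + (n + 2)))%N by rewrite /T; lia.
  by apply: He; apply: vsf_e.
pose d n : R := if (n < T)%N then 2 ^- (n + T) else 2 ^- n.
have td n : ((2 ^+ k)%:E * t n <= (2 ^+ k * d n)%:E)%E.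
  rewrite EFinM; apply: lee_wpmul2l; first by rewrite lee_fin exprn_ge0.
  by rewrite /d; case: ifP => [/t2|_].
have d0 n : 0 <= d n by rewrite /d; case: ifP => _; rewrite invr_ge0 exprn_ge0.
have dsum m : \sum_(0 <= i < m) d i <= 4 * 2 ^- T.
  have le1 : \sum_(0 <= i < m) d i <= \sum_(0 <= i < maxn m T) d i.
    rewrite [X in _ <= X](@big_cat_nat _ _ _ m) ?leq_maxl //=.
    by rewrite lerDl sumr_ge0.
  apply: le_trans le1 _.
  rewrite (@big_cat_nat _ _ _ T) ?leq_maxr //=.
  have -> : 4 * (2:R) ^- T = 2 * 2 ^- T + 2 * 2 ^- T by lra.
  apply: lerD.
    rewrite (@eq_big_nat _ _ _ 0 T _ (fun i => 2 ^- (i + T))); first exact: geo.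
    by move=> i /andP[_ iT]; rewrite /d iT.
  rewrite -{1}(add0n T) big_addn.
  rewrite (@eq_big_nat _ _ _ 0 _ _ (fun i => 2 ^- (i + T))); first exact: geo.
  by move=> i _; rewrite /d ltnNge leq_addl.
apply: lime_le.
  by apply: is_cvg_nneseries => n _ _; apply: mule_ge0; [rewrite lee_fin exprn_ge0 | exact: t0].
apply: nearW => m.
apply: (@le_trans _ _ (\sum_(0 <= i < m) ((2 ^+ k * d i)%:E))%E); first by apply: lee_sum => i _; exact: td.
rewrite sumEFin lee_fin -mulr_sumr.
have a0 : (2:R) ^+ k != 0 by rewrite expf_neq0.
have eT : (2:R) ^+ T = 2 ^+ k * (2 ^+ k * 4).
  by rewrite /T !exprD expr2; congr (_ * (_ * _)); lra.
apply: le_trans (ler_wpM2l (exprn_ge0 _ _) (dsum m)) _; first by [].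
rewrite eT le_eqVlt; apply/orP; left; apply/eqP; field.
by rewrite a0 /=; lra.
Qed.
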